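(* (Extinction-explosion principle.) For the branching-within-branching process described in the context, the parasite population either dies out or explodes: for every $\vec{s}\in\mathbf{N}$, $$\mathbb{P}_{\vec s}(\mathcal{Z}_n\to0)+\mathbb{P}_{\vec s}(\mathcal{Z}_n\to\infty)=1.$$
   Context: Branching-within-branching process (BwBP): Let $\mathbb{V}$ be the Ulam-Harris tree with root $\varnothing$. Let $(N_\mathsf{v})_{\mathsf{v}\in\mathbb{V}}$ be i.i.d. copies of an $\mathbb{N}_0$-valued random variable $N$ with law $(p_k)_{k\ge0}$ and finite mean $\nu=\mathbb{E}N$; each cell $\mathsf{v}$ has $N_\mathsf{v}$ daughter cells $\mathsf{v}1,\dots,\mathsf{v}N_\mathsf{v}$, giving a Galton-Watson cell tree with generations $\mathbb{T}_n$. For each $k\in\mathbb{N}$ let $X^{(\bullet,k)}=(X^{(1,k)},\dots,X^{(k,k)})$ be an $\mathbb{N}_0^k$-valued random vector and $X^{(\bullet,k)}_{i,\mathsf{v}}$ i.i.d. copies, independent over $k$ and of $(N_\mathsf{v})$; $X^{(j,k)}_{i,\mathsf{v}}:=0$ for $j>k$. If cell $\mathsf{v}$ contains $Z_\mathsf{v}$ parasites, daughter $\mathsf{v}j$ contains $Z_{\mathsf{v}j}=\sum_{i=1}^{Z_\mathsf{v}}X^{(j,N_\mathsf{v})}_{i,\mathsf{v}}$ parasites ($X^{(j,k)}_{i,\mathsf{v}}$ is the offspring of the $i$-th parasite of $\mathsf{v}$ going to the $j$-th daughter when there are $k$ daughters). Cells in one generation with their parasites evolve independently. $\mathcal{Z}_n=\sum_{\mathsf{v}\in\mathbb{T}_n}Z_\mathsf{v}$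 is the total number of parasites in generation $n$. Put $\mu_{j,k}=\mathbb{E}X^{(j,k)}$, $\gamma=\sum_{k\ge1}p_k\sum_{j=1}^k\mu_{j,k}$. Standing assumptions: $0<\gamma<\infty$; $p_1<1$ and, starting from one cell with one parasite, $\mathbb{P}(\mathcal{Z}_1=1)<1$; $p_k\,\mathbb{P}(X^{(j,k)}\ge2)>0$ for at least one pair $1\le j\le k$. $\mathbf{N}=\{(x_i)_{i\ge0}\in\mathbb{N}_0^\infty: x_i>0\text{ for only finitely many }i\}$, and for $\vec s=(s_0,s_1,\dots)\in\mathbf{N}$, $\mathbb{P}_{\vec s}$ denotes the law of the process started with $s_k$ cells containing exactly $k$ parasites, for each $k\ge0$. *)

(* Defs.v *)
From HB Require Import structures.
From mathcomp Require Import all_boot all_order all_algebra.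
From mathcomp Require Import all_classical all_reals all_analysis.
Set Implicit Arguments. Unset Strict Implicit. Unset Printing Implicit Defensive.
Import Order.TTheory GRing.Theory Num.Theory.
Local Open Scope classical_set_scope.
Local Open Scope ring_scope.

(* Cells are Ulam-Harris words, stored REVERSED: the root cells of the
   initial generation are [:: i] (i-th initial cell), and the j-th daughter
   (0-indexed, i.e. the paper's (j+1)-th daughter) of cell v is j :: v.
   N v : number of daughters of cell v.
   X k i v : the offspring vector X^{(.,k)}_{i,v} of parasite i (0-indexed)
   of cell v when there are k daughters; its j-th component (0-indexed)
   is the number of offspring going to daughter j. *)

(* j-th component of a k-vector, with the convention X^{(j,k)} = 0 for j >= k *)
Definition xcomp (k : nat) (x : {ffun 'I_k -> nat}) (j : nat) : nat :=
  oapp x 0%N (insub j : option 'I_k).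

(* initial cell contents for a start vector s : s`_k cells with k parasites *)
Definition init_counts (s : seq nat) : seq nat :=
  flatten [seq nseq (nth 0%N s k) k | k <- iota 0 (size s)].

Section Process.
Variables (T : Type) (N : seq nat -> T -> nat)
  (X : forall k : nat, nat -> seq nat -> T -> {ffun 'I_k -> nat}).

(* generation n : list of (cell, number of parasites in that cell) *)
Fixpoint gen (s : seq nat) (n : nat) (w : T) : seq (seq nat * nat) :=
  match n with
  | 0 => [seq ([:: i], nth 0%N (init_counts s) i) | i <- iota 0 (size (init_counts s))]
  | n'.+1 =>
      flatten [seq [seq (j :: vz.1,
                         (\sum_(i < vz.2) xcomp (X (N vz.1 w) i vz.1 w) j)%N)
                   | j <- iota 0 (N vz.1 w)]
              | vz <- gen s n' w]
  end.

Definition calZ (s : seq nat) (n : nat) (w : T) : nat :=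
  sumn [seq vz.2 | vz <- gen s n w].
End Process.

Definition tends_to_zero (u : nat -> nat) : Prop :=
  exists n0, forall n, (n0 <= n)%N -> u n = 0%N.

Definition tends_to_infty (u : nat -> nat) : Prop :=
  forall M, exists n0, forall n, (n0 <= n)%N -> (M <= u n)%N.

Section Assumptions.
Context {d : measure_display} {T : measurableType d} {R : realType}.
Variables (P : probability T R) (N : seq nat -> T -> nat)
  (X : forall k : nat, nat -> seq nat -> T -> {ffun 'I_k -> nat}).

Definition bwbp_measurable : Prop :=
  (forall v n, measurable [set w | N v w = n]) /\
  (forall k i v x, measurable [set w | X k i v w = x]).

Definition bwbp_independent : Prop :=
  forall (V : seq (seq nat)) (W : seq (nat * nat * seq nat))
    (a : seq nat -> nat) (b : forall k : nat, nat -> seq nat -> {ffun 'I_k -> nat}),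
    uniq V -> uniq W ->
    P [set w | all (fun v => N v w == a v) V &&
               all (fun t => X t.1.1 t.1.2 t.2 w == b t.1.1 t.1.2 t.2) W] =
    ((\prod_(v <- V) fine (P [set w | N v w = a v])) *
     (\prod_(t <- W) fine (P [set w | X t.1.1 t.1.2 t.2 w = b t.1.1 t.1.2 t.2])))%:E.

Definition bwbp_identically_distributed : Prop :=
  (forall v n, P [set w | N v w = n] = P [set w | N [::] w = n]) /\
  (forall k i v x, P [set w | X k i v w = x] = P [set w | X k 0%N [::] w = x]).

Definition pk (k : nat) : \bar R := P [set w | N [::] w = k].

Definition nu : \bar R := (\sum_(0 <= k <oo) ((k%:R)%:E * pk k))%E.

(* mu_{j,k} = E X^{(j,k)}  (j 0-indexed) *)
Definition mu (j k : nat) : \bar R :=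
  (\sum_(0 <= n <oo) ((n%:R)%:E * P [set w | xcomp (X k 0%N [::] w) j = n]))%E.

Definition gamma : \bar R :=
  (\sum_(1 <= k <oo) (pk k * \sum_(j < k) mu j k))%E.

Definition bwbp_standing : Prop :=
  [/\ (nu < +oo)%E,
      (0 < gamma)%E /\ (gamma < +oo)%E,
      (pk 1 < 1)%E,
      (P [set w | calZ N X [:: 0%N; 1%N] 1 w = 1%N] < 1)%E &
      exists k j, (j < k)%N /\
        (0 < pk k * P [set w | (2 <= xcomp (X k 0%N [::] w) j)%N])%E].
End Assumptions.

(* Main.v *)
Require Import Defs.
From HB Require Import structures.
From mathcomp Require Import all_boot all_order all_algebra.
From mathcomp Require Import all_classical all_reals all_analysis.
From mathcomp Require Import zify.
Set Implicit Arguments. Unset Strict Implicit. Unset Printing Implicit Defensive.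
Import Order.TTheory GRing.Theory Num.Theory.
Local Open Scope classical_set_scope.
Local Open Scope ring_scope.

Definition lst k (f : {ffun 'I_k -> nat}) : seq nat := [seq f j | j <- enum 'I_k].
Definition toff k (l : seq nat) : {ffun 'I_k -> nat} := [ffun j : 'I_k => nth 0%N l j].
Lemma toffK k (f : {ffun 'I_k -> nat}) : toff k (lst f) = f.
Proof.
apply/ffunP => j; rewrite ffunE /lst (nth_map j) ?size_enum_ord //.
by rewrite nth_ord_enum.
Qed.

Section Comb.
Variables (T : Type) (N : seq nat -> T -> nat)
  (X : forall k : nat, nat -> seq nat -> T -> {ffun 'I_k -> nat}) (s : seq nat).

Local Notation g := (gen N X s).
Local Notation Z := (calZ N X s).

Definition entry (w : T) (vz : seq nat * nat) : seq nat * nat * seq (seq nat) :=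
  (vz.1, N vz.1 w, [seq lst (X (N vz.1 w) i vz.1 w) | i <- iota 0 vz.2]).

Definition hd n w := flatten [seq map (entry w) (g k w) | k <- iota 0 n].

Definition inCyl (h : seq (seq nat * nat * seq (seq nat))) (w : T) : Prop :=
  forall e, e \in h -> N e.1.1 w = e.1.2 /\
    forall i, (i < size e.2)%N -> X e.1.2 i e.1.1 w = toff e.1.2 (nth [::] e.2 i).

Lemma mem_hd n w k vz : (k < n)%N -> vz \in g k w -> entry w vz \in hd n w.
Proof.
move=> kn vzin; apply/flattenP; exists (map (entry w) (g k w)); last exact: map_f.
by apply/mapP; exists k; rewrite // mem_iota.
Qed.

Lemma hd_self n w : inCyl (hd n w) w.
Proof.
move=> e /flattenP [l /mapP [k _ ->]] /mapP [vz _ ->] /=; split => // i.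
rewrite size_map size_iota => iz.
by rewrite (nth_map 0%N) ?size_iota // nth_iota // add0n toffK.
Qed.

Lemma cyl_pt n w w0 k vz : inCyl (hd n w0) w -> (k < n)%N -> vz \in g k w0 ->
  N vz.1 w = N vz.1 w0 /\
  forall i, (i < vz.2)%N -> X (N vz.1 w0) i vz.1 w = X (N vz.1 w0) i vz.1 w0.
Proof.
move=> H kn vzin; have [/= HN HX] := H _ (mem_hd kn vzin).
split=> // i iz; rewrite HX ?size_map ?size_iota //.
by rewrite (nth_map 0%N) ?size_iota // nth_iota // add0n toffK.
Qed.

Lemma genS k w : g k.+1 w = flatten [seq [seq (j :: vz.1,
                         (\sum_(i < vz.2) xcomp (X (N vz.1 w) i vz.1 w) j)%N)
                   | j <- iota 0 (N vz.1 w)]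
              | vz <- g k w].
Proof. by []. Qed.

Lemma loc n w w0 : inCyl (hd n w0) w -> forall k, (k <= n)%N -> g k w = g k w0.
Proof.
move=> H; elim=> [|k IH] kn; first by rewrite /gen; reflexivity.
rewrite !genS IH; last exact: ltnW.
congr flatten; apply/eq_in_map => vz vzin.
have [HN HX] := cyl_pt H kn vzin.
rewrite HN; apply: eq_map => j; congr pair; apply: eq_bigr => i _.
by rewrite HX.
Qed.

Lemma hd_eq n w w0 : inCyl (hd n w0) w -> hd n w = hd n w0.
Proof.
move=> H; rewrite /hd; congr flatten; apply/eq_in_map => k.
rewrite mem_iota add0n => /andP [_ kn]; rewrite (loc H (ltnW kn)).
apply/eq_in_map => vz vzin; have [HN HX] := cyl_pt H kn vzin.
rewrite /entry HN; congr (_, _, _); apply/eq_in_map => i.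
by rewrite mem_iota add0n => /andP [_ iz]; rewrite HX.
Qed.

Lemma cyl_hd n w w0 : inCyl (hd n w0) w <-> hd n w = hd n w0.
Proof. by split; [exact: hd_eq | move=> <-; exact: hd_self]. Qed.

Lemma Z_hd n w w0 k : hd n w = hd n w0 -> (k <= n)%N -> Z k w = Z k w0.
Proof. by move=> /cyl_hd H kn; rewrite /calZ (loc H kn). Qed.

Lemma g_hd n w w0 k : hd n w = hd n w0 -> (k <= n)%N -> g k w = g k w0.
Proof. by move=> /cyl_hd H kn; rewrite (loc H kn). Qed.


Lemma gS_cells k w : map fst (g k.+1 w) =
  [seq j :: v | v <- map fst (g k w), j <- iota 0 (N v w)].
Proof.
rewrite genS map_flatten -map_comp; congr flatten.
rewrite -map_comp; apply/eq_map => vz /=; rewrite -map_comp.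
by apply/eq_map => j.
Qed.

Lemma g_cells k w : uniq (map fst (g k w)) /\ all (fun v : seq nat => size v == k.+1) (map fst (g k w)).
Proof.
elim: k => [|k [IHu IHs]].
  rewrite /gen -map_comp; split.
    by rewrite (map_inj_uniq (f := fun i => [:: i])) ?iota_uniq // => i j [].
  by apply/allP => v /mapP [i _ ->].
rewrite gS_cells; split.
  apply: allpairs_uniq_dep => // [v _|]; first exact: iota_uniq.
  by move=> [v1 j1] [v2 j2] _ _ /= [-> ->].
apply/allP => u /flattenP [l /mapP [v vin ->]] /mapP [j _ ->] /=.
by rewrite eqSS; move/allP: IHs => /(_ v vin).
Qed.

Definition cell (e : seq nat * nat * seq (seq nat)) := e.1.1.

Lemma hd_cells n w : map cell (hd n w) = flatten [seq map fst (g k w) | k <- iota 0 n].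
Proof.
rewrite /hd map_flatten -map_comp; congr flatten; apply/eq_map => k /=.
by rewrite -map_comp.
Qed.

Lemma hd_uniq n w : uniq (map cell (hd n w)) /\ all (fun v : seq nat => (size v <= n)%N) (map cell (hd n w)).
Proof.
rewrite hd_cells; elim: n => [|n [IHu IHs]]; first by [].
rewrite -addn1 iotaD map_cat flatten_cat /= cats0 add0n.
have [gu gs] := g_cells n w.
split.
  rewrite cat_uniq IHu gu andbT /=; apply/hasPn => v vin.
  move/allP: gs => /(_ v vin) /eqP sv; apply/negP => /(allP IHs).
  by rewrite sv ltnn.
rewrite all_cat; apply/andP; split.
  by apply/allP => v /(allP IHs) H; apply: (leq_trans H); rewrite ?addn1 ?leqnSn ?leq_addr.
by apply/allP => v /(allP gs) /eqP ->; rewrite addn1.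
Qed.

Lemma mem_sumn (l : seq nat) x : x \in l -> (x <= sumn l)%N.
Proof.
elim: l => [|y l IH] //=; rewrite in_cons => /orP [/eqP ->|/IH H]; first exact: leq_addr.
exact: (leq_trans H (leq_addl _ _)).
Qed.

Lemma sumn_map0 (l : seq nat) (f : nat -> nat) : (forall j, f j = 0%N) -> sumn (map f l) = 0%N.
Proof. by move=> H; elim: l => //= j l ->; rewrite H. Qed.

Lemma Z_step n w : Z n.+1 w =
  sumn [seq sumn [seq (\sum_(i < vz.2) xcomp (X (N vz.1 w) i vz.1 w) j)%N | j <- iota 0 (N vz.1 w)]
       | vz <- g n w].
Proof.
rewrite /calZ genS map_flatten sumn_flatten -map_comp -map_comp; congr sumn; apply: eq_map => vz /=.
by rewrite -map_comp.
Qed.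

Lemma Z_abs1 n w : Z n w = 0%N -> Z n.+1 w = 0%N.
Proof.
rewrite Z_step /calZ; elim: (g n w) => [|vz l IH] //=.
move/eqP; rewrite addn_eq0 => /andP [/eqP z0 /eqP /IH ->]; rewrite addn0.
by apply: sumn_map0 => j; rewrite z0 big_ord0.
Qed.

Lemma Z_abs n w k : Z n w = 0%N -> Z (n + k) w = 0%N.
Proof. by move=> H; elim: k => [|k IH]; rewrite ?addn0 // addnS; apply: Z_abs1. Qed.

Lemma xcomp_sum k (x : {ffun 'I_k -> nat}) : x != [ffun => 0%N] ->
  (1 <= sumn [seq xcomp x j | j <- iota 0 k])%N.
Proof.
move=> xn0; have [j0 xj0] : exists j0, x j0 != 0%N.
  apply/existsP; apply: contraR xn0 => /existsPn H; apply/eqP/ffunP => j.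
  by rewrite ffunE; apply/eqP; move: (H j); rewrite negbK.
apply: (leq_trans _ (mem_sumn (x := xcomp x j0) _)); first by rewrite /xcomp valK lt0n.
by apply/mapP; exists (val j0); rewrite ?mem_iota ?ltn_ord //= /xcomp valK.
Qed.

Lemma Z_mono1 n w : (forall vz, vz \in g n w -> forall i, (i < vz.2)%N ->
    X (N vz.1 w) i vz.1 w != [ffun => 0%N]) -> (Z n w <= Z n.+1 w)%N.
Proof.
rewrite Z_step /calZ; elim: (g n w) => [|vz l IH] Hin //=.
apply: leq_add; last by apply: IH => u uin; apply: Hin; rewrite in_cons uin orbT.
rewrite sumnE big_map exchange_big /=.
rewrite -[X in (X <= _)%N]card_ord -sum1_card; apply: leq_sum => i _.
have := xcomp_sum (Hin vz (mem_head _ _) i (ltn_ord i)).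
by rewrite sumnE big_map.
Qed.

End Comb.

Lemma pigeon (u : nat -> nat) M : (forall n0, exists n, (n0 <= n)%N /\ (u n < M)%N) ->
  exists m, (m < M)%N /\ forall n0, exists n, (n0 <= n)%N /\ u n = m.
Proof.
elim: M => [|M IH] H.
  by have [n [_]] := H 0%N.
case: (pselect (forall n0, exists n, (n0 <= n)%N /\ u n = M)) => [HM|HM]; first by exists M.
have [b Hb] : exists b, forall n, (b <= n)%N -> u n <> M.
  case: (pselect (exists b, forall n, (b <= n)%N -> u n <> M)) => // Hno; exfalso; apply: HM => n0.
  case: (pselect (exists n, (n0 <= n)%N /\ u n = M)) => // Hno2; exfalso; apply: Hno.
  by exists n0 => n nn Hn; apply: Hno2; exists n.
have [m [mM Hm]] : exists m, (m < M)%N /\ forall n0, exists n, (n0 <= n)%N /\ u n = m.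
  apply: IH => n0; have [n [nn un]] := H (maxn n0 b); exists n; split.
    exact: leq_trans (leq_maxl _ _) nn.
  have neq := Hb n (leq_trans (leq_maxr _ _) nn).
  by move: un; rewrite ltnS leq_eqVlt => /orP [/eqP E|//]; exfalso.
by exists m; split => //; exact: ltnW.
Qed.

Section Prob.
Context {d : measure_display} {T : measurableType d} {R : realType}.
Variables (P : probability T R) (N : seq nat -> T -> nat)
  (X : forall k : nat, nat -> seq nat -> T -> {ffun 'I_k -> nat}) (s : seq nat).
Hypotheses (Hmeas : bwbp_measurable N X) (Hind : bwbp_independent P N X)
  (Hid : bwbp_identically_distributed P N X).

Local Notation g := (gen N X s).
Local Notation Z := (calZ N X s).
Local Notation hdn := (hd N X s).

Lemma meas_all (I : eqType) (A : seq I) (F : I -> set T) :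
  (forall i, measurable (F i)) -> measurable [set w | forall i, i \in A -> F i w].
Proof.
move=> mF; elim: A => [|a A IH].
  rewrite (_ : [set w | _] = setT); first exact: measurableT.
  by apply/funext => w; apply/propext; split.
rewrite (_ : [set w | _] = F a `&` [set w | forall i, i \in A -> F i w]).
  exact: measurableI.
apply/funext => w; apply/propext; split.
  by move=> H; split; [apply: H; rewrite mem_head | move=> i iA; apply: H; rewrite in_cons iA orbT].
by move=> [Fa H] i; rewrite in_cons => /orP [/eqP -> //|]; exact: H.
Qed.

Lemma meas_cyl h : measurable (inCyl N X h).
Proof.
rewrite (_ : inCyl N X h = [set w | forall e, e \in h ->
   ([set w | N e.1.1 w = e.1.2] `&` [set w | forall i, i \in iota 0 (size e.2) ->
     [set w | X e.1.2 i e.1.1 w = toff e.1.2 (nth [::] e.2 i)] w]) w]).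
  apply: meas_all => e; apply: measurableI; first exact: Hmeas.1.
  by apply: meas_all => i; exact: Hmeas.2.
apply/funext => w; apply/propext; split.
  move=> H e /H [H1 H2]; split => // i; rewrite mem_iota add0n => /andP [_]; exact: H2.
move=> H e /H [H1 H2]; split => // i iz; apply: H2; by rewrite mem_iota add0n.
Qed.

Definition inv n (Phi : T -> Prop) := forall w w0, hdn n w = hdn n w0 -> Phi w0 -> Phi w.

Definition Apiece n (Phi : T -> Prop) (i : nat) : set T :=
  [set w | pickle_inv i = Some (hdn n w) /\ Phi w].

Lemma Apiece_meas n Phi i : inv n Phi -> measurable (Apiece n Phi i).
Proof.
move=> Hinv.
case: (pselect (exists w0, pickle_inv i = Some (hdn n w0) /\ Phi w0)) => [[w0 [Hi Hp]]|Hno].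
  rewrite (_ : Apiece n Phi i = inCyl N X (hdn n w0)); first exact: meas_cyl.
  apply/funext => w; apply/propext; rewrite cyl_hd; split.
    by move=> [Hi' _]; move: Hi'; rewrite Hi => -[].
  by move=> Hw; split; [rewrite Hi Hw | exact: Hinv Hw Hp].
rewrite (_ : Apiece n Phi i = set0); first exact: measurable0.
by apply/funext => w; apply/propext; split => // -[H1 H2]; apply: Hno; exists w.
Qed.

Lemma Phi_bigcup n (Phi : T -> Prop) : [set w | Phi w] = \bigcup_i Apiece n Phi i.
Proof.
apply/funext => w; apply/propext; split.
  by move=> Hw; exists (pickle (hdn n w)) => //; split => //; rewrite pickleK_inv.
by move=> [i _ [_ Hw]].
Qed.

Lemma Apiece_triv n Phi : trivIset setT (Apiece n Phi).
Proof.
move=> i j _ _ [w [[Hi _] [Hj _]]].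
have := @pickle_invK (seq (seq nat * nat * seq (seq nat))) i.
have := @pickle_invK (seq (seq nat * nat * seq (seq nat))) j; rewrite Hi Hj /= => <- <-.
by [].
Qed.

Lemma meas_inv n Phi : inv n Phi -> measurable [set w | Phi w].
Proof.
move=> Hinv; rewrite (Phi_bigcup n); apply: bigcup_measurable => i _.
exact: Apiece_meas.
Qed.


Definition pv (h : seq (seq nat * nat * seq (seq nat))) : R :=
  \prod_(e <- h) (fine (P [set w | N e.1.1 w = e.1.2]) *
     \prod_(i <- iota 0 (size e.2))
        fine (P [set w | X e.1.2 i e.1.1 w = toff e.1.2 (nth [::] e.2 i)])).

Lemma P_cyl h : uniq (map cell h) -> P (inCyl N X h) = (pv h)%:E.
Proof.
move=> hu.
pose e0 : seq nat * nat * seq (seq nat) := ([::], 0%N, [::]).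
pose look v := nth e0 h (index v (map cell h)).
have lookE e : e \in h -> look e.1.1 = e.
  move=> eh; rewrite /look.
  have -> : e.1.1 = nth (cell e0) (map cell h) (index e h).
    by rewrite (nth_map e0) ?index_mem // nth_index.
  by rewrite index_uniq ?size_map ?index_mem // nth_index.
pose V := map cell h.
pose a v := (look v).1.2.
pose W := [seq (e.1.2, i, e.1.1) | e <- h, i <- iota 0 (size e.2)].
pose b := fun (k i : nat) (v : seq nat) => toff k (nth [::] (look v).2 i).
have Wu : uniq W.
  apply: allpairs_uniq_dep; first exact: (map_uniq hu).
    by move=> e _; exact: iota_uniq.
  move=> [e1 i1] [e2 i2] /flattenP [l1 /mapP [x1 x1h ->]] /mapP [y1 _ /(congr1 tag) /= E1].
  move=> /flattenP [l2 /mapP [x2 x2h ->]] /mapP [y2 _ /(congr1 tag) /= E2].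
  subst x1 x2 => /= -[E3 E4 E5]; subst i2.
  by rewrite -(lookE e1) // -(lookE e2) // E5.
have Hset : inCyl N X h = [set w | all (fun v => N v w == a v) V &&
   all (fun t => X t.1.1 t.1.2 t.2 w == b t.1.1 t.1.2 t.2) W].
  apply/funext => w; apply/propext; split.
    move=> H; apply/andP; split.
      apply/allP => v /mapP [e eh ->]; have [HN _] := H e eh.
      by rewrite /a /cell lookE // HN.
    apply/allP => t /allpairsPdep [e [i [eh iin ->]]] /=.
    have [_ HX] := H e eh; rewrite /b lookE // HX //.
    by move: iin; rewrite mem_iota add0n => /andP [].
  move=> /andP [HV HW] e eh; split.
    move/allP: HV => /(_ e.1.1 (map_f cell eh)) /eqP ->.
    by rewrite /a lookE.
  move=> i iz.
  have : (e.1.2, i, e.1.1) \in W by apply/allpairsPdep; exists e, i; rewrite mem_iota add0n.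
  by move/(allP HW) => /eqP -> /=; rewrite /b lookE.
rewrite Hset (Hind a b hu Wu); congr EFin.
rewrite /pv big_split /= big_map big_allpairs_dep /=; congr (_ * _).
  by apply: eq_big_seq => e eh; rewrite /a /cell lookE.
apply: eq_big_seq => e eh; apply: eq_bigr => i _.
by rewrite /b lookE.
Qed.

Lemma pv_cat h1 h2 : pv (h1 ++ h2) = pv h1 * pv h2.
Proof. by rewrite /pv big_cat. Qed.

Lemma cyl_cat h1 h2 : inCyl N X (h1 ++ h2) = inCyl N X h1 `&` inCyl N X h2.
Proof.
apply/funext => w; apply/propext; split.
  by move=> H; split => e eh; apply: H; rewrite mem_cat eh ?orbT.
by move=> [H1 H2] e; rewrite mem_cat => /orP [/H1|/H2].
Qed.

Lemma pv_ge0 h : 0 <= pv h.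
Proof.
apply: prodr_ge0 => e _; apply: mulr_ge0; first exact: fine_ge0.
by apply: prodr_ge0 => i _; exact: fine_ge0.
Qed.


Lemma fineP_le1 A : measurable A -> fine (P A) <= 1.
Proof.
move=> mA; rewrite -[1]/(fine 1%E); apply: fine_le.
- by rewrite ge0_fin_numE // (le_lt_trans (probability_le1 P mA)) // ltry.
- by [].
- exact: probability_le1.
Qed.

Section Beta.
Variables (k1 : nat) (x1 : {ffun 'I_k1 -> nat}).

Definition beta n w0 := [seq (vz.1, k1, nseq vz.2 (lst x1)) | vz <- g n w0 & (0 < vz.2)%N].

Lemma beta_cells n w0 : map cell (beta n w0) = map fst [seq vz <- g n w0 | (0 < vz.2)%N].
Proof. by rewrite /beta -map_comp. Qed.

Lemma beta_uniq n w0 : uniq (map cell (hdn n w0 ++ beta n w0)).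
Proof.
have [hu hs] := hd_uniq N X s n w0; have [gu gs] := g_cells N X s n w0.
have sub : subseq (map cell (beta n w0)) (map fst (g n w0)).
  by rewrite beta_cells; apply: map_subseq; exact: filter_subseq.
rewrite map_cat cat_uniq hu (subseq_uniq sub gu) andbT /=.
apply/hasPn => v /(mem_subseq sub) vin; move/allP: gs => /(_ v vin) /eqP sv.
by apply/negP => /(allP hs); rewrite sv ltnn.
Qed.

Definition pp := fine (pk P N k1).
Definition qq := fine (P [set w | X k1 0 [::] w = x1]).
Definition SS := sumn [seq xcomp x1 j | j <- iota 0 k1].

Lemma prod_iota_const m z (c : R) : \prod_(i <- iota m z) c = c ^+ z.
Proof. by rewrite big_const_seq count_predT size_iota iter_mulr_1. Qed.

Lemma pv_beta n w0 : pv (beta n w0) = \prod_(vz <- g n w0 | (0 < vz.2)%N) (pp * qq ^+ vz.2).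
Proof.
rewrite /pv big_map big_filter; apply: eq_bigr => vz _ /=.
rewrite Hid.1 /pp /pk size_nseq; congr (_ * _).
rewrite -(prod_iota_const 0 vz.2); apply: eq_big_seq => i.
rewrite mem_iota add0n => /andP [_ iz].
by rewrite nth_nseq iz toffK Hid.2.
Qed.

Lemma prod_lb (l : seq (seq nat * nat)) : 0 <= pp <= 1 -> 0 <= qq ->
  (pp * qq) ^+ (sumn (map snd l)) <= \prod_(vz <- l | (0 < vz.2)%N) (pp * qq ^+ vz.2).
Proof.
move=> /andP [p0 p1] q0; elim: l => [|vz l IH]; first by rewrite big_nil expr0.
rewrite big_cons /= exprD; case: ifPn => [zpos|]; last first.
  by rewrite -leqNgt leqn0 => /eqP ->; rewrite expr0 mul1r.
apply: ler_pM => //.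
- by apply: exprn_ge0; exact: mulr_ge0.
- by apply: exprn_ge0; exact: mulr_ge0.
rewrite exprMn; apply: ler_pM => //; try exact: exprn_ge0.
case: vz.2 zpos => // z _; rewrite exprS; apply: ler_piMr => //.
by rewrite exprn_ile1.
Qed.

Lemma sumn_mull c (l : seq nat) : sumn [seq (c * x)%N | x <- l] = (c * sumn l)%N.
Proof. by elim: l => [|x l IH] /=; rewrite ?muln0 // IH mulnDr. Qed.

Lemma Z_next n w0 w : inCyl N X (hdn n w0 ++ beta n w0) w -> Z n.+1 w = (Z n w0 * SS)%N.
Proof.
rewrite cyl_cat => -[Hh Hb]; have Hg : g n w = g n w0 := loc Hh (leqnn n).
rewrite /calZ genS Hg map_flatten sumn_flatten -map_comp.
have : forall vz, vz \in g n w0 -> (0 < vz.2)%N ->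
   (vz.1, k1, nseq vz.2 (lst x1)) \in beta n w0.
  by move=> vz vzin zpos; apply: map_f; rewrite mem_filter zpos.
elim: (g n w0) => [|vz l IH] Hin //=.
rewrite mulnDl IH; last by move=> u uin; apply: Hin; rewrite in_cons uin orbT.
congr addn; rewrite -map_comp.
case: (posnP vz.2) => [z0|zpos].
  rewrite z0 mul0n; elim: (iota 0 (N vz.1 w)) => //= j r ->.
  by rewrite big_ord0.
have [HN HX] := Hb _ (Hin _ (mem_head _ _) zpos); move: HN HX => /= HN HX.
rewrite HN.
rewrite /SS -sumn_mull -map_comp; congr sumn; apply: eq_map => j /=.
rewrite (eq_bigr (fun=> xcomp x1 j)); first by rewrite sum_nat_const card_ord.
by move=> i _; rewrite HX ?size_nseq // nth_nseq ltn_ord toffK.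
Qed.

Lemma Apiece_cyl n Phi i w0 : inv n Phi -> pickle_inv i = Some (hdn n w0) -> Phi w0 ->
  Apiece n Phi i = inCyl N X (hdn n w0).
Proof.
move=> Hinv Hi Hp; apply/funext => w; apply/propext; rewrite cyl_hd; split.
  by move=> [Hi' _]; move: Hi'; rewrite Hi => -[].
by move=> Hw; split; [rewrite Hi Hw | exact: Hinv Hw Hp].
Qed.

Lemma inv_Z n m : inv n.+1 [set w | Z n.+1 w = m].
Proof. by move=> w w0 H /= <-; apply: Z_hd H _. Qed.

Lemma step n m Phi : inv n Phi -> (forall w, Phi w -> Z n w = m) ->
  (((pp * qq) ^+ m)%:E * P [set w | Phi w] <=
   P ([set w | Phi w] `&` [set w | Z n.+1 w = (m * SS)%N]))%E.
Proof.
move=> Hinv HZ.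
have mNext : measurable [set w | Z n.+1 w = (m * SS)%N] by apply: meas_inv; exact: inv_Z.
have pq0 : 0 <= pp <= 1 by rewrite fine_ge0 //= /pp /pk; apply: fineP_le1; exact: Hmeas.1.
have q0 : 0 <= qq by exact: fine_ge0.
rewrite (Phi_bigcup n Phi) setI_bigcupl !measure_semi_bigcup.
- rewrite -nneseriesZl; last by move=> i _; exact: measure_ge0.
  apply: lee_nneseries => [i _ _|i _].
    by apply: mule_ge0 => //; rewrite lee_fin; apply: exprn_ge0; apply: mulr_ge0; case/andP: pq0.
  case: (pselect (exists w0, pickle_inv i = Some (hdn n w0) /\ Phi w0)) => [[w0 [Hi Hp]]|Hno]; last first.
    rewrite (_ : Apiece n Phi i = set0) ?measure0 ?mule0 //.
    by apply/funext => w; apply/propext; split => // -[H1 H2]; apply: Hno; exists w.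
  rewrite (Apiece_cyl Hinv Hi Hp).
  have hu := beta_uniq n w0.
  have hu1 : uniq (map cell (hdn n w0)) by move: hu; rewrite map_cat cat_uniq => /andP [].
  apply: (@le_trans _ _ (P (inCyl N X (hdn n w0 ++ beta n w0)))).
    have H : (((pp * qq) ^+ m)%:E * (pv (hdn n w0))%:E <= (pv (hdn n w0 ++ beta n w0))%:E)%E.
      rewrite pv_cat -EFinM lee_fin mulrC; apply: ler_wpM2l; first exact: pv_ge0.
      rewrite pv_beta; move: (prod_lb (g n w0) pq0 q0).
      by rewrite -(HZ _ Hp) /calZ.
    by move: H; rewrite -(P_cyl hu1) -(P_cyl hu).
  apply: le_measure; rewrite ?inE.
  + exact: meas_cyl.
  + by apply: measurableI; [exact: meas_cyl | exact: mNext].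
  + move=> w Hw; split; first by move: Hw; rewrite cyl_cat => -[].
    by rewrite /= (Z_next Hw) (HZ _ Hp).
- by move=> i; apply: measurableI => //; exact: Apiece_meas.
- move=> i j _ _ [w [[Ai _] [Aj _]]]; apply: (Apiece_triv (n := n) (Phi := Phi)) => //.
  by exists w.
- apply: bigcup_measurable => i _; apply: measurableI => //; exact: Apiece_meas.
- by move=> i; exact: Apiece_meas.
- exact: Apiece_triv.
- by apply: bigcup_measurable => i _; exact: Apiece_meas.
Qed.

End Beta.

Lemma inv_Zs n (Q : (nat -> nat) -> Prop) :
  (forall u v, (forall k, (k <= n)%N -> u k = v k) -> Q v -> Q u) ->
  inv n (fun w => Q (fun k => Z k w)).
Proof. by move=> HQ w w0 H; apply: HQ => k kn; exact: Z_hd H kn. Qed.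

Definition Gm m := [set w | forall n0, exists n, (n0 <= n)%N /\ Z n w = m].
Definition Ev m S n0 := \bigcup_k [set w | Z (n0 + k) w = m /\ Z (n0 + k).+1 w = (m * S)%N].

Lemma meas_Zeq n m : measurable [set w | Z n w = m].
Proof. by apply: (meas_inv (n := n)); apply: (inv_Zs (Q := fun u => u n = m)) => u v H; rewrite H. Qed.

Lemma Ev_meas m S n0 : measurable (Ev m S n0).
Proof.
apply: bigcup_measurable => k _.
apply: (meas_inv (n := (n0 + k).+1)).
apply: (inv_Zs (Q := fun u => u (n0 + k) = m /\ u (n0 + k).+1 = (m * S)%N)) => u v H.
by rewrite !H // leqW.
Qed.

Lemma G_bound k1 (x1 : {ffun 'I_k1 -> nat}) m n0 :
  (((pp k1 * qq x1) ^+ m)%:E * P (Gm m) <= P (Ev m (SS x1) n0))%E.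
Proof.
pose H k := [set w | Z (n0 + k) w = m /\ forall j, (j < k)%N -> Z (n0 + j) w <> m].
have invH k : inv (n0 + k) (H k).
  move=> w w0 Hw [H1 H2]; split; first by rewrite (Z_hd Hw).
  move: H2 => H2.
  move=> j jk; rewrite (Z_hd Hw); first exact: H2.
  by rewrite leq_add2l ltnW.
have mH k : measurable (H k) by exact: (meas_inv (invH k)).
have c0 : (0 <= ((pp k1 * qq x1) ^+ m)%:E)%E.
  rewrite lee_fin; apply: exprn_ge0; apply: mulr_ge0; exact: fine_ge0.
have GH : Gm m `<=` \bigcup_k H k.
  move=> w Gw; have [n [n0n Zn]] := Gw n0.
  have ex : exists k, Z (n0 + k) w == m by exists (n - n0)%N; rewrite (subnKC n0n) Zn eqxx.
  case: (ex_minnP ex) => k /eqP Zk kmin; exists k => //; split => // j jk Zj.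
  by have := kmin j (introT eqP Zj); rewrite leqNgt jk.
have trivH : trivIset setT H.
  move=> i j _ _ [w [[Zi Hi] [Zj Hj]]]; case: (ltngtP i j) => // ij; exfalso.
  - exact: Hj _ ij Zi.
  - exact: Hi _ ij Zj.
have mNk k : measurable (H k `&` [set w | Z (n0 + k).+1 w = (m * SS x1)%N]).
  by apply: measurableI => //; exact: meas_Zeq.
apply: (@le_trans _ _ (((pp k1 * qq x1) ^+ m)%:E * P (\bigcup_k H k))%E).
  apply: lee_wpmul2l => //; apply: le_measure; rewrite ?inE //.
  - rewrite (_ : Gm m = \bigcap_n0 \bigcup_k [set w | Z (n0 + k) w = m]).
      apply: bigcap_measurableType => i _; apply: bigcup_measurable => k _; exact: meas_Zeq.
    apply/funext => w; apply/propext; split.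
      move=> Gw i _; have [n [i_n Zn]] := Gw i; exists (n - i)%N => //=; by rewrite subnKC.
    move=> Hw i; have [k _ Zk] := Hw i I; exists (i + k)%N; split => //; exact: leq_addr.
  - exact: bigcup_measurable.
rewrite measure_semi_bigcup //; last exact: bigcup_measurable.
rewrite -nneseriesZl //.
apply: (@le_trans _ _ (\sum_(k <oo) P (H k `&` [set w | Z (n0 + k).+1 w = (m * SS x1)%N]))%E).
  apply: lee_nneseries => [k _ _|k _]; first exact: mule_ge0.
  apply: step; [exact: invH | by move=> w []].
rewrite -measure_semi_bigcup //.
- apply: le_measure; rewrite ?inE.
  + exact: bigcup_measurable.
  + exact: Ev_meas.
  + by move=> w [k _ [[Zk _] Zk1]]; exists k.
- move=> i j _ _ [w [[Hi _] [Hj _]]]; apply: trivH => //; by exists w.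
- exact: bigcup_measurable.
Qed.

Lemma G_null_gen k1 (x1 : {ffun 'I_k1 -> nat}) m : 0 < pp k1 * qq x1 ->
  P (\bigcap_n0 Ev m (SS x1) n0) = 0%E -> P (Gm m) = 0%E.
Proof.
move=> pos Hcap.
have mcap : measurable (\bigcap_n0 Ev m (SS x1) n0).
  apply: bigcap_measurableType => i _; exact: Ev_meas.
have cv : (P \o Ev m (SS x1)) @ \oo --> P (\bigcap_n0 Ev m (SS x1) n0).
  apply: nonincreasing_cvg_mu => //.
  - by rewrite (le_lt_trans (probability_le1 P (Ev_meas _ _ _))) // ltry.
  - by move=> i; exact: Ev_meas.
  - move=> i j ij; apply/subsetPset => w [k _ [Zk Zk1]].
    exists (j - i + k)%N => //; rewrite addnA subnKC //; by split.
have : (((pp k1 * qq x1) ^+ m)%:E * P (Gm m) <= lim ((P \o Ev m (SS x1)) @ \oo))%E.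
  apply: lime_ge; first exact: (cvgP _ cv).
  by apply: nearW => n0; exact: G_bound.
rewrite (cvg_lim _ cv) // Hcap pmule_rle0; last by rewrite lte_fin; apply: exprn_gt0.
by move=> H; apply/eqP; rewrite eq_le H measure_ge0.
Qed.

Lemma Gm_meas m : measurable (Gm m).
Proof.
rewrite (_ : Gm m = \bigcap_n0 \bigcup_k [set w | Z (n0 + k) w = m]).
  apply: bigcap_measurableType => i _; apply: bigcup_measurable => k _; exact: meas_Zeq.
apply/funext => w; apply/propext; split.
  move=> Gw i _; have [n [i_n Zn]] := Gw i; exists (n - i)%N => //=; by rewrite subnKC.
move=> Hw i; have [k _ Zk] := Hw i I; exists (i + k)%N; split => //; exact: leq_addr.
Qed.

Definition Bad := [set w | exists n vz i, vz \in g n w /\ (i < vz.2)%N /\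
   X (N vz.1 w) i vz.1 w = [ffun => 0%N]].

Lemma capE_A m : (0 < m)%N -> \bigcap_n0 Ev m 0 n0 = set0.
Proof.
move=> m0; apply/seteqP; split => // w Hw.
have [k _ [Zk Zk1]] := Hw 0%N I.
have [k' _ [Zk' _]] := Hw (0 + k).+1%N I.
move: Zk1; rewrite muln0 => /(Z_abs k'); rewrite Zk' => m00.
by move: m0; rewrite m00.
Qed.

Lemma capE_B m S : (0 < m)%N -> (2 <= S)%N -> \bigcap_n0 Ev m S n0 `<=` Bad.
Proof.
move=> m0 S2 w Hw; case: (pselect (Bad w)) => // nB; exfalso.
have mono n : (Z n w <= Z n.+1 w)%N.
  apply: Z_mono1 => vz vzin i iz; apply/eqP => HX; apply: nB; by exists n, vz, i.
have monoD n j : (Z n w <= Z (n + j) w)%N.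
  elim: j => [|j IH]; first by rewrite addn0.
  by rewrite addnS (leq_trans IH (mono _)).
have [k _ [Zk Zk1]] := Hw 0%N I.
have [k' _ [Zk' _]] := Hw (0 + k).+1%N I.
have := monoD (0 + k).+1%N k'; rewrite Zk' Zk1 => H.
have : (m * 2 <= m * S)%N by rewrite leq_mul2l S2 orbT.
move=> H2; have := leq_trans H2 H; lia.
Qed.

Lemma Bad_null : (forall k, fine (pk P N k) * fine (P [set w | X k 0 [::] w = [ffun => 0%N]]) = 0) ->
  exists B, measurable B /\ P B = 0%E /\ Bad `<=` B.
Proof.
move=> H0.
pose BT (t : seq nat * nat * nat) := [set w | N t.1.1 w = t.2 /\ X t.2 t.1.2 t.1.1 w = [ffun => 0%N]].
pose F n := if @unpickle (seq nat * nat * nat)%type n is Some t then BT t else set0.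
have mBT t : measurable (BT t).
  by apply: (measurableI [set w | N t.1.1 w = t.2]); [exact: Hmeas.1 | exact: Hmeas.2].
have mF n : measurable (F n) by rewrite /F; case: unpickle => [t|]; [exact: mBT | exact: measurable0].
have PBT t : P (BT t) = 0%E.
  pose b := fun (k : nat) (_ : nat) (_ : seq nat) => ([ffun => 0%N] : {ffun 'I_k -> nat}).
  have -> : BT t = [set w | all (fun v => N v w == (fun _ => t.2) v) [:: t.1.1] &&
     all (fun u => X u.1.1 u.1.2 u.2 w == b u.1.1 u.1.2 u.2) [:: (t.2, t.1.2, t.1.1)]].
    apply/funext => w; apply/propext; rewrite /= !andbT; split.
      by move=> [H1 H2]; apply/andP; split; apply/eqP.
    by move=> /andP [/eqP H1 /eqP H2].
  rewrite (Hind (fun _ => t.2) b) // !big_seq1 /= Hid.1 Hid.2.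
  by have := H0 t.2; rewrite /pk => ->.
exists (\bigcup_n F n); split; [|split].
- by apply: bigcup_measurable => n _.
- apply/eqP; rewrite eq_le measure_ge0 andbT.
  apply: (le_trans (measure_sigma_subadditive P mF (bigcup_measurable (fun n _ => mF n)) (@subset_refl _ _))).
  rewrite eseries0 // => n _ _; rewrite /F; case: unpickle => [t|]; [exact: PBT | exact: measure0].
- move=> w [n [vz [i [vzin [iz HX]]]]]; exists (pickle (vz.1, i, N vz.1 w)) => //.
  by rewrite /F pickleK.
Qed.

Lemma pk_meas k : measurable [set w | N [::] w = k].
Proof. exact: Hmeas.1. Qed.

Lemma exists_x1 k j : (j < k)%N ->
  (0 < pk P N k * P [set w | (2 <= xcomp (X k 0 [::] w) j)%N])%E ->
  exists x1 : {ffun 'I_k -> nat}, (2 <= xcomp x1 j)%N /\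
    0 < fine (pk P N k) * fine (P [set w | X k 0 [::] w = x1]).
Proof.
move=> jk Hpos.
have pk0 : (0 < pk P N k)%E.
  rewrite lt_neqAle /pk measure_ge0 andbT; apply/eqP => H; move: Hpos.
  by rewrite /pk -H mul0e ltxx.
have fin A : measurable A -> (P A < +oo)%E.
  by move=> mA; rewrite (le_lt_trans (probability_le1 P mA)) // ltry.
case: (pselect (exists x1 : {ffun 'I_k -> nat}, (2 <= xcomp x1 j)%N /\
   (0 < P [set w | X k 0 [::] w = x1])%E)) => [[x1 [x1j Px1]]|Hno].
  exists x1; split => //; apply: mulr_gt0; apply: fine_gt0; apply/andP; split => //.
    by apply: fin; exact: pk_meas.
  by apply: fin; exact: Hmeas.2.
exfalso; move: Hpos.
pose F n := if @unpickle {ffun 'I_k -> nat} n is Some x then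
  (if (2 <= xcomp x j)%N then [set w | X k 0 [::] w = x] else set0) else set0.
have mF n : measurable (F n).
  rewrite /F; case: unpickle => [x|]; last exact: measurable0.
  by case: ifP => _; [exact: Hmeas.2 | exact: measurable0].
have AF : [set w | (2 <= xcomp (X k 0 [::] w) j)%N] = \bigcup_n F n.
  apply/funext => w; apply/propext; split.
    by move=> Hw; exists (pickle (X k 0 [::] w)) => //; rewrite /F pickleK Hw.
  move=> [n _]; rewrite /F; case: unpickle => [x|] //; case: ifP => // xj /= Hx.
  by rewrite /= Hx.
have A0 : P [set w | (2 <= xcomp (X k 0 [::] w) j)%N] = 0%E.
  apply/eqP; rewrite eq_le measure_ge0 andbT AF.
  apply: (le_trans (measure_sigma_subadditive P mF (bigcup_measurable (fun n _ => mF n)) (@subset_refl _ _))).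
  rewrite eseries0 // => n _ _; rewrite /F; case: unpickle => [x|]; last exact: measure0.
  case: ifP => xj; last exact: measure0.
  apply/eqP; rewrite eq_le measure_ge0 andbT leNgt; apply/negP => Hx; apply: Hno.
  by exists x.
by rewrite A0 mule0 ltxx.
Qed.

Lemma SS0 k : SS ([ffun => 0%N] : {ffun 'I_k -> nat}) = 0%N.
Proof.
rewrite /SS; apply: sumn_map0 => j; rewrite /xcomp; case: insub => [a|] //=.
by rewrite ffunE.
Qed.

Lemma G_null m : bwbp_standing P N X -> (0 < m)%N -> P (Gm m) = 0%E.
Proof.
move=> [_ _ _ _ [k [j [jk Hkj]]]] m0.
case: (pselect (exists k0, 0 < fine (pk P N k0) *
   fine (P [set w | X k0 0 [::] w = [ffun => 0%N]]))) => [[k0 Hk0]|Hno].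
  apply: (G_null_gen (x1 := [ffun => 0%N] : {ffun 'I_k0 -> nat})) => //.
  by rewrite SS0 capE_A // measure0.
have H0 k' : fine (pk P N k') * fine (P [set w | X k' 0 [::] w = [ffun => 0%N]]) = 0.
  apply/eqP; rewrite eq_le mulr_ge0 ?fine_ge0 ?measure_ge0 // andbT leNgt.
  by apply/negP => H; apply: Hno; exists k'.
have [x1 [x1j Hx1]] := exists_x1 jk Hkj.
have [B [mB [PB BadB]]] := Bad_null H0.
apply: (G_null_gen (x1 := x1)) => //.
apply/eqP; rewrite eq_le measure_ge0 andbT -PB; apply: le_measure; rewrite ?inE //.
- by apply: bigcap_measurableType => i _; exact: Ev_meas.
- apply: subset_trans BadB; apply: capE_B => //.
  apply: (leq_trans x1j); apply: mem_sumn; apply: map_f; by rewrite mem_iota.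
Qed.

Lemma final : bwbp_standing P N X ->
  (P [set w | tends_to_zero (fun n => calZ N X s n w)] +
   P [set w | tends_to_infty (fun n => calZ N X s n w)] = 1)%E.
Proof.
move=> Hst.
pose Z0 := [set w | tends_to_zero (fun n => calZ N X s n w)].
pose Zi := [set w | tends_to_infty (fun n => calZ N X s n w)].
have Z0E : Z0 = \bigcup_n [set w | Z n w = 0%N].
  apply/funext => w; apply/propext; split.
    by move=> [n0 H]; exists n0 => //; apply: H.
  move=> [n _ Zn]; exists n => n' nn'; rewrite -(subnKC nn'); exact: Z_abs.
have mZ0 : measurable Z0 by rewrite Z0E; apply: bigcup_measurable => n _; exact: meas_Zeq.
have mle M n : measurable [set w | (M <= Z n w)%N].
  apply: (meas_inv (n := n)); apply: (inv_Zs (Q := fun u => (M <= u n)%N)) => u v H.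
  by rewrite H.
have mZi : measurable Zi.
  rewrite (_ : Zi = \bigcap_M \bigcup_n0 \bigcap_k [set w | (M <= Z (n0 + k) w)%N]).
    apply: bigcap_measurableType => M _; apply: bigcup_measurable => n0 _.
    by apply: bigcap_measurableType => k _.
  apply/funext => w; apply/propext; split.
    move=> H M _; have [n0 Hn0] := H M; exists n0 => // k _; apply: Hn0; exact: leq_addr.
  move=> H M; have [n0 _ Hn0] := H M I; exists n0 => n nn.
  by have := Hn0 (n - n0)%N I; rewrite subnKC.
have disj : Z0 `&` Zi = set0.
  apply/seteqP; split => // w [[n0 H0] Hi]; have [n1 H1] := Hi 1%N.
  have := H1 (maxn n0 n1) (leq_maxr _ _); rewrite H0 //; exact: leq_maxl.
have null : P (~` (Z0 `|` Zi)) = 0%E.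
  apply/eqP; rewrite eq_le measure_ge0 andbT.
  have sub : ~` (Z0 `|` Zi) `<=` \bigcup_m Gm m.+1.
  move=> w /= Hw.
  have nZi : ~ Zi w by move=> H; apply: Hw; right.
  have nZ0 : ~ Z0 w by move=> H; apply: Hw; left.
  have [M HM] : exists M, forall n0, exists n, (n0 <= n)%N /\ (Z n w < M)%N.
    case: (pselect (exists M, forall n0, exists n, (n0 <= n)%N /\ (Z n w < M)%N)) => // Hno.
    exfalso; apply: nZi => M.
    case: (pselect (exists n0, forall n, (n0 <= n)%N -> (M <= Z n w)%N)) => // Hno2.
    exfalso; apply: Hno; exists M => n0.
    case: (pselect (exists n, (n0 <= n)%N /\ (Z n w < M)%N)) => // Hno3.
    exfalso; apply: Hno2; exists n0 => n nn; rewrite leqNgt; apply/negP => H; apply: Hno3.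
    by exists n.
  have [m [_ Gw]] := pigeon HM.
  case: m Gw => [|m] Gw; last by exists m.
  exfalso; apply: nZ0; have [n [_ Zn]] := Gw 0%N.
  exists n => n' nn'; rewrite -(subnKC nn'); exact: Z_abs.
  have HH := measure_sigma_subadditive P (fun m => Gm_meas m.+1) (measurableC (measurableU _ _ mZ0 mZi)) sub.
  apply: (le_trans HH).
  by rewrite eseries0 // => m _ _; exact: G_null.
have mU := measurableU _ _ mZ0 mZi.
have H3 := measureU P mU (measurableC mU) (setICr (Z0 `|` Zi)).
have E := probability_setT P; rewrite -(setUv (Z0 `|` Zi)) in E.
have E' : (P (Z0 `|` Zi) + P (~` (Z0 `|` Zi)) = 1)%E := etrans (esym H3) E.
rewrite null adde0 in E'.
have E2 : (P Z0 + P Zi)%E = P (Z0 `|` Zi) := esym (measureU P mZ0 mZi disj).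
exact: (etrans E2 E').
Qed.

End Prob.

Unset Implicit Arguments.

Theorem theorem1 (d : measure_display) (T : measurableType d) (R : realType)
  (P : probability T R) (N : seq nat -> T -> nat)
  (X : forall k : nat, nat -> seq nat -> T -> {ffun 'I_k -> nat}) :
  bwbp_measurable N X ->
  bwbp_independent P N X ->
  bwbp_identically_distributed P N X ->
  bwbp_standing P N X ->
  forall s : seq nat,
    (P [set w | tends_to_zero (fun n => calZ N X s n w)] +
     P [set w | tends_to_infty (fun n => calZ N X s n w)] = 1)%E.
Proof.
move=> Hm Hi Hd Hst s.
by apply: final.
Qed.
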